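(* Let $y\in\{0,1\}^m$ be a non-empty binary sequence and $n\ge1$. Then the problems $$\max_{x\in\{0,1\}^n}\binom{x}{y}\qquad\text{and}\qquad \max_{p\in[0,1]^n}\mathbf F(p,y)$$ are equivalent, i.e. they have the same optimal value. Furthermore, given any (possibly non-integral) $p^*\in[0,1]^n$ maximizing $\mathbf F(p,y)$, one can construct an integral $x^*\in\{0,1\}^n$ that maximizes $\mathbf F(x,y)$ over $[0,1]^n$ and consequently also maximizes $\binom{x}{y}$ over $\{0,1\}^n$.
   Context: For binary sequences $f,g$, the binomial coefficient $\binom{f}{g}$ is the number of index sets $S\subseteq\{1,\dots,|f|\}$ with $|S|=|g|$ such that the subsequence of $f$ indexed by $S$ equals $g$ (with $\binom{f}{e}=1$ for the empty sequence $e$). The relaxed binomial coefficient $\mathbf F:[0,1]^n\times\{0,1\}^m\to\mathbb R$ is defined by: if $1\le m\le n$, $\mathbf F(p,v)=\sum_{S\subseteq[n],|S|=m}\prod_{j=1}^m p_{S_j}^{v_j}(1-p_{S_j})^{1-v_j}$ with $S_1<\dots<S_m$ the elements of $S$; if $m=0\le n$, $\mathbf F(p,v)=1$; otherwise $\mathbf F(p,v)=0$. For $x\in\{0,1\}^n$, $\mathbf F(x,y)=\binom{x}{y}$. The first problem is maximum-likelihood decoding of the input of length $n$ of a deletion channel from the observed output $y$. *)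

(* Defs.v *)
From HB Require Import structures.
From mathcomp Require Import all_boot all_order all_algebra.
Set Implicit Arguments. Unset Strict Implicit. Unset Printing Implicit Defensive.
Import Order.TTheory GRing.Theory Num.Theory.
Local Open Scope ring_scope.

Definition binom_seq (f g : seq bool) : nat :=
  #|[set S : {set 'I_(size f)} |
      (#|S| == size g) && ([seq nth false f (val i) | i <- enum S] == g)]|.

Definition relaxedF (R : nzRingType) (n : nat) (p : 'I_n -> R) (v : seq bool) : R :=
  if (1 <= size v)%N && (size v <= n)%N then
    \sum_(S : {set 'I_n} | #|S| == size v)
      \prod_(ij <- zip (enum S) v) (p ij.1 ^+ ij.2 * (1 - p ij.1) ^+ (1 - ij.2))
  else if size v == 0%N then 1 else 0.

Definition in_cube (R : realFieldType) (n : nat) (p : 'I_n -> R) : Prop :=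
  forall i, 0 <= p i <= 1.

Definition of_bits (R : nzRingType) (n : nat) (x : n.-tuple bool) : 'I_n -> R :=
  fun i => (tnth x i : nat)%:R.

(* Main.v *)
Require Import Defs.
From HB Require Import structures.
From mathcomp Require Import all_boot all_order all_algebra ring lra.
Import Order.TTheory GRing.Theory Num.Theory.
Set Implicit Arguments. Unset Strict Implicit. Unset Printing Implicit Defensive.
Local Open Scope ring_scope.
Section S.
Variable R : realFieldType.
Variable y : seq bool.

Definition Phi (n : nat) (q : 'I_n -> R) (s : seq 'I_n) (v : seq bool) : R :=
  \prod_(ij <- zip s v) (q ij.1 ^+ ij.2 * (1 - q ij.1) ^+ (1 - ij.2)).

Definition upd (n : nat) (p : 'I_n -> R) (i : 'I_n) (c : R) : 'I_n -> R :=
  fun j => if j == i then c else p j.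

Lemma Phi_indep n (s : seq 'I_n) v p i c : i \notin s -> Phi (upd p i c) s v = Phi p s v.
Proof.
elim: s v => [|x s IH] [|b v]; rewrite /Phi /= ?big_nil ?big_cons //= inE.
move=> /norP [hx hs]; rewrite -!/(Phi _ s v) IH // /upd eq_sym (negbTE hx) //.
Qed.

Lemma Phi_aff n (s : seq 'I_n) v p i : uniq s ->
  Phi p s v = (1 - p i) * Phi (upd p i 0) s v + p i * Phi (upd p i 1) s v.
Proof.
elim: s v => [|x s IH] [|b v] /=; rewrite /Phi /= ?big_nil ?big_cons /=; try (move=> *; ring).
move=> /andP [hx hs]; rewrite -!/(Phi _ s v).
case: (eqVneq x i) => [exi|nxi].
  subst x; rewrite !Phi_indep // /upd eqxx.
  by case: b => /=; rewrite ?expr0 ?expr1; ring.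
rewrite (IH v hs) /upd (negbTE nxi); ring.
Qed.

Lemma F_ext n (p q : 'I_n -> R) : p =1 q -> relaxedF p y = relaxedF q y.
Proof.
move=> H; rewrite /relaxedF; case: ifP => // _.
by apply: eq_bigr => S _; apply: eq_bigr => ij _; rewrite H.
Qed.

Lemma F_aff n (p : 'I_n -> R) i :
  relaxedF p y = (1 - p i) * relaxedF (upd p i 0) y + p i * relaxedF (upd p i 1) y.
Proof.
rewrite /relaxedF; case: ifP => _.
  rewrite !mulr_sumr -big_split /=; apply: eq_bigr => S _.
  exact: (Phi_aff _ _ _ (enum_uniq _)).
case: ifP => _; ring.
Qed.

Definition intg (a : R) := (a == 0) || (a == 1).

Lemma round_int n (p : 'I_n -> R) : (forall i, intg (p i)) ->
  exists x : n.-tuple bool, relaxedF p y <= relaxedF (of_bits R x) y.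
Proof.
move=> H; exists [tuple (p i == 1) | i < n]; rewrite le_eqVlt; apply/orP; left; apply/eqP.
apply: F_ext => i; rewrite /of_bits tnth_mktuple.
by case/orP: (H i) => /eqP ->; rewrite ?eqxx // eq_sym oner_eq0.
Qed.

Lemma round n (p : 'I_n -> R) : in_cube p ->
  exists x : n.-tuple bool, relaxedF p y <= relaxedF (of_bits R x) y.
Proof.
have: forall k (p : 'I_n -> R), (#|[set i | ~~ intg (p i)]| <= k)%N -> in_cube p ->
  exists x : n.-tuple bool, relaxedF p y <= relaxedF (of_bits R x) y; last first.
  by move=> H Hc; apply: (H _ p (leqnn _) Hc).
elim=> [|k IH] q Hk Hc; (case: (pickP [pred i | ~~ intg (q i)]) => [i Hi | Hn];
   last by apply: round_int => i; apply/negbFE: (Hn i)).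
  have : i \in [set i | ~~ intg (q i)] by rewrite inE.
  by move: Hk; rewrite leqn0 cards_eq0 => /eqP ->; rewrite inE.
pose a := relaxedF (upd q i 0) y; pose b := relaxedF (upd q i 1) y.
pose c : R := if a <= b then 1 else 0.
have Hle : relaxedF q y <= relaxedF (upd q i c) y.
  rewrite (F_aff q i) -/a -/b /c; have /andP [h0 h1] := Hc i.
  case: ifP => hab; rewrite -/a -/b.
    have : 0 <= (1 - q i) * (b - a) by apply: mulr_ge0; lra.
    nra.
  have hba : b <= a by move/negbT: hab; rewrite -ltNge => /ltW.
  have : 0 <= q i * (a - b) by apply: mulr_ge0; lra.
  nra.
have Hc' : in_cube (upd q i c).
  move=> j; rewrite /upd; case: ifP => _; last exact: Hc.
  by rewrite /c; case: ifP => _; rewrite ?lexx ?ler01.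
have Hk' : (#|[set j | ~~ intg (upd q i c j)]| <= k)%N.
  have Hs : [set j | ~~ intg (upd q i c j)] \subset [set j | ~~ intg (q j)] :\ i.
    apply/subsetP => j; rewrite !inE /upd; case: eqP => [_|_ //].
    by rewrite /c /intg; case: ifP => _; rewrite ?eqxx ?orbT.
  have := subset_leq_card Hs.
  move: Hk; rewrite (cardsD1 i [set j | ~~ intg (q j)]) inE (Hi : ~~ intg (q i)) add1n ltnS.
  by move=> h1 h2; apply: leq_trans h2 h1.
have [x Hx] := IH _ Hk' Hc'.
by exists x; apply: le_trans Hx.
Qed.

Lemma prod_ind k (f : seq bool) (s : seq 'I_k) (v : seq bool) : size s = size v ->
  Phi (fun i : 'I_k => ((nth false f i : nat)%:R : R)) s v =
  (([seq nth false f (val i) | i <- s] == v) : nat)%:R.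
Proof.
elim: s v => [|x s IH] [|b v] //=; rewrite /Phi /= ?big_nil ?big_cons //=.
move=> [] /IH; rewrite /Phi => ->; rewrite eqseq_cons.
case: (nth false f x); case: b; case: (_ == v);
  by rewrite /= ?expr0 ?expr1 ?subrr ?subr0 ?mul1r ?mulr1 ?mul0r ?mulr0.
Qed.

Lemma binomF (f : seq bool) : (0 < size y)%N ->
  relaxedF (fun i : 'I_(size f) => ((nth false f i : nat)%:R : R)) y = (binom_seq f y)%:R.
Proof.
move=> hy; rewrite /relaxedF /binom_seq; case: ifP => [/andP [_ Hle] | Hn].
  rewrite (eq_bigr (fun S : {set 'I_(size f)} =>
     (([seq nth false f (val i) | i <- enum S] == y) : nat)%:R)); last first.
    by move=> S /eqP HS; apply: prod_ind; rewrite -cardE.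
  rewrite -natr_sum; congr (_%:R).
  rewrite -sum1_card big_mkcond /= [RHS]big_mkcond /=; apply: eq_bigr => S _.
  by rewrite inE; case: (_ == _); case: (_ == _).
rewrite (negbTE (lt0n_neq0 hy)).
have -> : [set S : {set 'I_(size f)} | (#|S| == size y) &&
      ([seq nth false f (val i) | i <- enum S] == y)] = set0.
  apply/setP => S; rewrite !inE; case: eqP => // HS.
  have := max_card (mem S); rewrite card_ord HS.
  by move: Hn; rewrite hy /= => /negbT; rewrite -ltnNge => /leq_trans h /h; rewrite ltnn.
by rewrite cards0.
Qed.

Lemma relaxedF_cast n1 n2 (e : n1 = n2) (p : 'I_n2 -> R) :
  relaxedF p y = relaxedF (fun i : 'I_n1 => p (cast_ord e i)) y.
Proof. by case: n2 / e p => p; apply: F_ext => i; rewrite cast_ord_id. Qed.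

Lemma F_bits n (x : n.-tuple bool) : (0 < size y)%N ->
  relaxedF (of_bits R x) y = (binom_seq x y)%:R.
Proof.
move=> hy; rewrite (relaxedF_cast (size_tuple x)) -binomF //.
by apply: F_ext => i; rewrite /of_bits (tnth_nth false).
Qed.
End S.

Lemma bits_cube (R : realFieldType) n (x : n.-tuple bool) : in_cube (of_bits R x).
Proof. by move=> i; rewrite /of_bits; case: (tnth x i); rewrite /= ?lexx ?ler01. Qed.

Theorem theorem4 (R : realFieldType) (n : nat) (y : seq bool) :
  (0 < size y)%N -> (0 < n)%N ->
  let M := (\max_(x : n.-tuple bool) binom_seq x y)%N in
  (* the two problems have the same optimal value M *)
  ((forall p : 'I_n -> R, in_cube p -> relaxedF p y <= M%:R) /\
   (exists2 p : 'I_n -> R, in_cube p & relaxedF p y = M%:R)) /\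
  (* from any maximizer p* of F one obtains an integral maximizer x* *)
  (forall pstar : 'I_n -> R, in_cube pstar ->
     (forall p : 'I_n -> R, in_cube p -> relaxedF p y <= relaxedF pstar y) ->
     exists xstar : n.-tuple bool,
       (forall p : 'I_n -> R, in_cube p -> relaxedF p y <= relaxedF (of_bits R xstar) y) /\
       (forall x : n.-tuple bool, (binom_seq x y <= binom_seq xstar y)%N)).
Proof.
move=> hy hn M; split; first split.
- move=> p hp; have [x hx] := round y hp; apply: le_trans hx _.
  by rewrite F_bits // ler_nat /M (leq_bigmax (F := fun x : n.-tuple bool => binom_seq x y) x).
- have hc : (0 < #|{: n.-tuple bool}|)%N by apply/card_gt0P; exists [tuple of nseq n false].
  have [x0 hx0] := @bigop.eq_bigmax _ (fun x : n.-tuple bool => binom_seq x y) hc.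
  by exists (of_bits R x0); [exact: bits_cube | rewrite F_bits // /M hx0].
move=> ps hps hmax; have [x hx] := round y hps; exists x; split.
  by move=> p hp; apply: le_trans (hmax p hp) hx.
move=> z; rewrite -(ler_nat R) -!F_bits //.
exact: le_trans (hmax _ (bits_cube R z)) hx.
Qed.
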